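(* Let $\Omega\subset\mathbb{R}^n$ be a domain that is star-shaped with respect to a point $x^*\in\Omega$, and let $g\in C(\Omega)$. Define $u:\Omega\to\mathbb{R}$ by \[ u(x)=\max\{ g(y) \mid y = x^* + t(x-x^* )\in\Omega,\ t\in[0,1]\}. \] Then $u$ is star-shaped with respect to $x^*$ and $u=SS^+(g)$.
   Context: A set $S\subset\mathbb{R}^n$ is star-shaped with respect to $x^*$ if $x\in S$ implies $tx^*+(1-t)x\in S$ for all $t\in[0,1]$. A function $v:\Omega\to\mathbb{R}$ is star-shaped with respect to $x^*$ if each sublevel set $\{x\in\Omega: v(x)\le\alpha\}$, $\alpha\in\mathbb{R}$, is star-shaped with respect to $x^*$. The upper star-shaped envelope of $g$ with respect to $x^*$ is $SS^+(g)(x)=\inf\{v(x) \mid v:\Omega\to\mathbb{R} \text{ star-shaped with respect to } x^*,\ v\ge g \text{ on } \Omega\}$. *)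

(* Defs.v *)
From HB Require Import structures.
From mathcomp Require Import all_boot all_order all_algebra.
From mathcomp Require Import all_classical all_reals all_analysis.
Set Implicit Arguments. Unset Strict Implicit. Unset Printing Implicit Defensive.
Import Order.TTheory GRing.Theory Num.Theory.
Import numFieldNormedType.Exports.
Local Open Scope classical_set_scope.
Local Open Scope ring_scope.

Definition star_set (R : realType) (n : nat) (S : set 'rV[R]_n) (xs : 'rV[R]_n) : Prop :=
  forall x, S x -> forall t : R, 0 <= t <= 1 -> S (t *: xs + (1 - t) *: x).

Definition star_fun (R : realType) (n : nat) (Omega : set 'rV[R]_n) (xs : 'rV[R]_n)
  (v : 'rV[R]_n -> R) : Prop :=
  forall alpha : R, star_set [set x | Omega x /\ v x <= alpha] xs.

Definition SSplus (R : realType) (n : nat) (Omega : set 'rV[R]_n) (xs : 'rV[R]_n)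
  (g : 'rV[R]_n -> R) (x : 'rV[R]_n) : R :=
  inf [set v x | v in [set v : 'rV[R]_n -> R |
         star_fun Omega xs v /\ (forall y, Omega y -> g y <= v y)]].

(* u(x) = max { g(y) | y = xs + t (x - xs) in Omega, t in [0,1] } (taken as a sup;
   it is attained by continuity/compactness). *)
Definition ray_max (R : realType) (n : nat) (Omega : set 'rV[R]_n) (xs : 'rV[R]_n)
  (g : 'rV[R]_n -> R) (x : 'rV[R]_n) : R :=
  sup [set g (xs + t *: (x - xs)) | t in
         [set t : R | 0 <= t <= 1 /\ Omega (xs + t *: (x - xs))]].

(* Main.v *)
Require Import Defs.
From HB Require Import structures.
From mathcomp Require Import all_boot all_order all_algebra.
From mathcomp Require Import all_classical all_reals all_analysis.
Import Order.TTheory GRing.Theory Num.Theory.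
Import numFieldNormedType.Exports.
Local Open Scope classical_set_scope.
Local Open Scope ring_scope.
Set Implicit Arguments. Unset Strict Implicit.

Section H.
Variables (R : realType) (n : nat).
Implicit Types (x xs : 'rV[R]_n) (s t : R).

Lemma L1 xs x s : s *: xs + (1 - s) *: x = xs + (1 - s) *: (x - xs).
Proof.
rewrite scalerBr !scalerBl !scale1r.
by rewrite opprB [s *: xs - xs]addrC [RHS]addrCA addNKr addrC.
Qed.

Lemma L2 xs x s t : xs + s *: ((xs + t *: (x - xs)) - xs) = xs + (s * t) *: (x - xs).
Proof. by rewrite [xs + t *: _]addrC addrK scalerA. Qed.

Lemma seg (Omega : set 'rV[R]_n) xs x t : star_set Omega xs -> Omega x ->
  0 <= t <= 1 -> Omega (xs + t *: (x - xs)).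
Proof.
move=> st Ox /andP[t0 t1].
have -> : t = 1 - (1 - t) by rewrite opprB addrC subrK.
rewrite -L1; apply: st => //.
by rewrite subr_ge0 t1 lerBlDr lerDl t0.
Qed.

Lemma cont_open (Omega : set 'rV[R]_n) (g : 'rV[R]_n -> R) : open Omega ->
  {within Omega, continuous g} -> {in Omega, continuous g}.
Proof.
move=> oO cg x; rewrite inE => Ox.
have := cg x.
rewrite /continuous_at -nbhs_subspace_interior //.
by move/interior_id: oO => ->.
Qed.

Lemma bnd (Omega : set 'rV[R]_n) xs (g : 'rV[R]_n -> R) x : open Omega ->
  star_set Omega xs -> {within Omega, continuous g} -> Omega x ->
  has_ubound [set g (xs + t *: (x - xs)) | t in
         [set t : R | 0 <= t <= 1 /\ Omega (xs + t *: (x - xs))]].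
Proof.
move=> oO st cg Ox.
have cf : {within `[0, 1], continuous (g \o (fun t : R => xs + t *: (x - xs)))}.
  apply: within_continuous_comp.
    move=> y; rewrite inE => -[t t01 <-].
have h01 : 0 <= t <= 1 by move: t01 => /=; rewrite in_itv.
exact: (cont_open oO cg (mem_set (seg st Ox h01))).
  apply: continuous_subspaceT => t.
  apply: (@cvgD _ _ _ _ _ (fun=> xs) (fun t0 : R => t0 *: (x - xs))); first exact: cvg_cst.
  exact: cvgZr_tmp cvg_id.
have [c c01 cmax] := EVT_max ler01 cf.
exists (g (xs + c *: (x - xs))) => _ [t [t01 _] <-].
by apply: cmax; rewrite in_itv /=.
Qed.

Lemma ne (Omega : set 'rV[R]_n) xs (g : 'rV[R]_n -> R) x : Omega xs ->
  [set g (xs + t *: (x - xs)) | t in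
         [set t : R | 0 <= t <= 1 /\ Omega (xs + t *: (x - xs))]] !=set0.
Proof.
move=> Oxs; exists (g xs), 0; rewrite /= scale0r addr0 //.
by split => //; rewrite lexx ler01.
Qed.

Lemma ub_ray (Omega : set 'rV[R]_n) xs (g : 'rV[R]_n -> R) x t : open Omega ->
  star_set Omega xs -> {within Omega, continuous g} -> Omega x ->
  0 <= t <= 1 -> g (xs + t *: (x - xs)) <= ray_max Omega xs g x.
Proof.
move=> oO st cg Ox t01; apply: (ub_le_sup (bnd oO st cg Ox)).
by exists t => //; split => //; apply: seg.
Qed.

End H.
Unset Implicit Arguments. Set Strict Implicit.

Theorem proposition2p11 (R : realType) (n : nat) (Omega : set 'rV[R]_n)
  (xs : 'rV[R]_n) (g : 'rV[R]_n -> R) :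
  open Omega -> connected Omega -> Omega xs -> star_set Omega xs ->
  {within Omega, continuous g} ->
  star_fun Omega xs (ray_max Omega xs g) /\
  (forall x, Omega x -> ray_max Omega xs g x = SSplus Omega xs g x).
Proof.
move=> oO _ Oxs st cg.
have sf : star_fun Omega xs (ray_max Omega xs g).
  move=> alpha x [Ox ux] t h01; split; first exact: st.
  have /andP[t0 t1] := h01.
  apply: le_trans ux; apply: ge_sup; first exact: ne.
  move=> _ [s [/andP[s0 s1] _] <-].
  rewrite L1 L2; apply: ub_ray => //.
  by rewrite mulr_ge0 ?subr_ge0 //= mulr_ile1 ?subr_ge0 // lerBlDr lerDl.
split => // x Ox.
have lb : forall v, star_fun Omega xs v -> (forall y, Omega y -> g y <= v y) ->
    ray_max Omega xs g x <= v x.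
  move=> v sv gv; apply: ge_sup; first exact: ne.
  move=> _ [t [/andP[t0 t1] _] <-].
  have h : 0 <= 1 - t <= 1 by rewrite subr_ge0 t1 lerBlDr lerDl t0.
  have := sv (v x) x (conj Ox (lexx _)) (1 - t) h.
  have e : 1 - (1 - t) = t by rewrite opprB addrC subrK.
  rewrite L1 e => -[Oy vy].
  exact: le_trans (gv _ Oy) vy.
have gu : forall y, Omega y -> g y <= ray_max Omega xs g y.
  move=> y Oy; have := ub_ray (t:=1) oO st cg Oy; rewrite scale1r addrC subrK; apply.
  by rewrite lexx ler01.
have Eu : [set v x | v in [set v : 'rV[R]_n -> R |
         star_fun Omega xs v /\ (forall y, Omega y -> g y <= v y)]]
         (ray_max Omega xs g x) by exists (ray_max Omega xs g).
apply/le_anti/andP; split.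
  apply: lb_le_inf; first by exists (ray_max Omega xs g x).
  by move=> _ [v [sv gv] <-]; apply: lb.
apply: ge_inf => //.
by exists (ray_max Omega xs g x) => _ [v [sv gv] <-]; apply: lb.
Qed.
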